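(* Let $q$ be an odd prime power, $s \ge 2$, and let $E,F\subset\mathbb{F}_q^s$ satisfy $(\#E)(\#F) \ge 900q^s$. Then \[ \nu(0) \le \frac{21}{30} (\# E) (\# F). \]
   Context: $\mathbb{F}_q$ is the finite field with $q$ elements, $q$ odd. For $\mathbf{x}\in\mathbb{F}_q^s$, $|\mathbf{x}|^2=\sum_i x_i^2$. $\nu(0)=\#\{(\mathbf{x},\mathbf{y})\in E\times F: |\mathbf{x}-\mathbf{y}|^2=0\}$. *)

(* Defs.v *)
From HB Require Import structures.
From mathcomp Require Import all_boot all_order all_algebra all_field.
Set Implicit Arguments. Unset Strict Implicit. Unset Printing Implicit Defensive.
Import GRing.Theory.
Local Open Scope ring_scope.

Definition sqnorm (F : finFieldType) (s : nat) (x : 'rV[F]_s) : F :=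
  \sum_(i < s) x 0 i ^+ 2.

Definition nu0 (F : finFieldType) (s : nat) (E G : {set 'rV[F]_s}) : nat :=
  #|[set p : 'rV[F]_s * 'rV[F]_s |
      [&& p.1 \in E, p.2 \in G & sqnorm (p.1 - p.2) == 0]]|.

(* Main.v *)
Require Import Defs.
From mathcomp Require Import all_boot all_order all_algebra all_field.
From mathcomp Require Import ring zify.
Import Order.TTheory GRing.Theory Num.Theory.
Local Open Scope ring_scope.

Lemma Fp_addE p (pr : prime p) (x y : 'F_p) : val (x + y)%R = ((val x + val y) %% p)%N.
Proof. by rewrite /=; move: (nat_of_ord x + nat_of_ord y)%N => n; rewrite Fp_cast. Qed.

Lemma Fp_lt p (pr : prime p) (x : 'F_p) : (nat_of_ord x < p)%N.
Proof. have := ltn_ord x; rewrite /=; move: (nat_of_ord x) => n. by rewrite Fp_cast. Qed.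

Section Char.
Import VectorInternalTheory.
Lemma exists_char (K : finFieldType) : exists chi : K -> algC,
  [/\ (forall a b, chi (a+b) = chi a * chi b), (forall a, `|chi a| = 1) & chi 1 != 1].
Proof.
have [p pr_p pcharKp] := finPcharP K.
have v1 : v2r (1 : pPrimeCharType pcharKp) != 0.
  apply/eqP => h.
  have : v2r (1 : pPrimeCharType pcharKp) = v2r (0:pPrimeCharType pcharKp).
    by rewrite h linear0.
  by move/v2r_inj/eqP; rewrite oner_eq0.
have [i vi] : exists i, v2r (1 : pPrimeCharType pcharKp) 0 i != 0.
  apply/existsP; move: v1; apply: contraR; rewrite negb_exists => /forallP H.
  by apply/eqP/rowP => j; rewrite mxE; apply/eqP; have := H j; rewrite negbK.
have p_gt0 : (0 < p)%N by apply: prime_gt0.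
have [z pz] := C_prim_root_exists p_gt0.
exists (fun a : K => z ^+ (v2r (a : pPrimeCharType pcharKp) 0 i : 'F_p)); split.
- move=> a b. rewrite raddfD mxE -exprD.
  rewrite -(prim_expr_mod pz (_ + _)%N); congr (_ ^+ _).
  exact: Fp_addE.
- move=> a; rewrite normrX.
  have zn : `|z| = 1.
    apply/eqP; rewrite -(pexpr_eq1 (n:=p)) //; last by rewrite -normrX prim_expr_order // normr1.
  by rewrite zn expr1n.
- have := eq_prim_root_expr pz (v2r (1 : pPrimeCharType pcharKp) 0 i) 0.
  rewrite expr0 => ->; rewrite mod0n modn_small; first by rewrite -val_eqE in vi.
  exact: Fp_lt.
Qed.
End Char.


Section Main.
Variable K : finFieldType.
Variable chi : K -> algC.
Hypothesis chiD : forall a b, chi (a + b) = chi a * chi b.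
Hypothesis chiN1 : forall a, `|chi a| = 1.
Hypothesis chi1 : chi 1 != 1.

Lemma chi_neq0 a : chi a != 0.
Proof. by rewrite -normr_eq0 chiN1 oner_eq0. Qed.

Lemma chi0 : chi 0 = 1.
Proof.
have h := chiD 0 0; rewrite addr0 in h.
by apply: (mulfI (chi_neq0 0)); rewrite -h mulr1.
Qed.

Lemma chiN a : chi (- a) = (chi a)^*.
Proof.
apply: (mulfI (chi_neq0 a)); rewrite -chiD subrr chi0 -normCK chiN1 expr1n //.
Qed.

Lemma sum_chi_zero (V : finZmodType) (L : V -> K) u :
  (forall x y, L (x + y) = L x + L y) -> chi (L u) != 1 ->
  \sum_x chi (L x) = 0.
Proof.
move=> LD cu.
have h : \sum_x chi (L x) = chi (L u) * \sum_x chi (L x).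
  rewrite {1}(reindex_inj (addIr u)) /= mulr_sumr; apply: eq_bigr => x _.
  by rewrite LD chiD mulrC.
have : (1 - chi (L u)) * \sum_x chi (L x) = 0 by rewrite mulrBl mul1r -h subrr.
by move/eqP; rewrite mulf_eq0 subr_eq0 eq_sym (negbTE cu) => /eqP.
Qed.

Lemma orthK a : \sum_t chi (t * a) = if a == 0 then (#|K|)%:R else 0.
Proof.
case: eqP => [->|/eqP a0].
  by under eq_bigr do rewrite mulr0 chi0; rewrite sumr_const cardT.
apply: (@sum_chi_zero K (fun t => t * a) a^-1) => [x y|]; first by rewrite mulrDl.
by rewrite mulVf.
Qed.

Variable s : nat.
Definition dot (x y : 'rV[K]_s) : K := \sum_i x 0 i * y 0 i.

Lemma dotDl x u w : dot (x + u) w = dot x w + dot u w.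
Proof. by rewrite /dot -big_split; apply: eq_bigr => i _; rewrite mxE mulrDl. Qed.

Lemma dotBr x y w : dot x (y - w) = dot x y - dot x w.
Proof. by rewrite /dot -sumrB; apply: eq_bigr => i _; rewrite !mxE mulrBr. Qed.

Lemma sqnormB x y : sqnorm (x - y) = sqnorm x + sqnorm y - (dot x y) *+ 2.
Proof.
rewrite /sqnorm /dot -sumrMnl -big_split -sumrB; apply: eq_bigr => i _.
by rewrite !mxE sqrrB addrAC.
Qed.

Lemma orthV c w : c != 0 ->
  \sum_(x : 'rV[K]_s) chi (c * dot x w) = if w == 0 then (#|K| ^ s)%:R else 0.
Proof.
move=> c0; case: eqP => [->|/eqP w0].
  have d0 x : dot x 0 = 0 by rewrite /dot big1 // => i _; rewrite mxE mulr0.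
  under eq_bigr do rewrite d0 mulr0 chi0.
  by rewrite sumr_const card_mx mul1n.
have [i wi] : exists i, w 0 i != 0.
  apply/existsP; move: w0; apply: contraR; rewrite negb_exists => /forallP H.
  apply/eqP/matrixP => i0 j; rewrite mxE (ord1 i0); apply/eqP; have := H j; rewrite negbK; apply.
pose u : 'rV[K]_s := \row_j (if j == i then (c * w 0 i)^-1 else 0).
apply: (@sum_chi_zero _ (fun x => c * dot x w) u) => [x y|]; first by rewrite dotDl mulrDr.
have -> : dot u w = (c * w 0 i)^-1 * w 0 i.
  rewrite /dot (bigD1 i) //= big1 ?addr0 => [|j ji]; first by rewrite mxE eqxx.
  by rewrite mxE (negbTE ji) mul0r.
rewrite invfM !mulrA mulfV // mul1r mulVf //.
Qed.
Lemma CS (T : finType) (A : {pred T}) (r : T -> algC) :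
  (forall i, r i \is Num.real) ->
  (\sum_(i in A) r i) ^+ 2 <= #|A|%:R * \sum_(i in A) r i ^+ 2.
Proof.
move=> rR.
have H : 0 <= \sum_(i in A) \sum_(j in A) (r i - r j) ^+ 2.
  apply: sumr_ge0 => i _; apply: sumr_ge0 => j _.
  by rewrite -real_normK ?rpredB // exprn_ge0.
have E : \sum_(i in A) \sum_(j in A) (r i - r j) ^+ 2 =
   (#|A|%:R * \sum_(i in A) r i ^+ 2 - (\sum_(i in A) r i) ^+ 2) *+ 2.
  under eq_bigr do under eq_bigr do rewrite sqrrB.
  under eq_bigr do rewrite big_split /= sumrB sumr_const sumrMnl -mulr_sumr.
  rewrite big_split /= sumrB !sumrMnl sumr_const -mulr_suml -expr2.
  move: (\sum_(i in A) r i ^+ 2) (\sum_(i in A) r i) => a b.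
  by rewrite mulrnBl mulr_natl addrAC -mulr2n.
by move: H; rewrite E pmulrn_lge0 // subr_ge0.
Qed.

Lemma S_bound (E F : {set 'rV[K]_s}) t : t != 0 -> (2%:R : K) != 0 ->
  `|\sum_(x in E) \sum_(y in F) chi (t * sqnorm (x - y))| ^+ 2
     <= (#|E| * (#|F| * #|K| ^ s))%:R.
Proof.
move=> t0 two0.
set c := - (t *+ 2).
have c0 : c != 0 by rewrite oppr_eq0 -mulr_natr mulf_neq0.
pose b (y : 'rV[K]_s) := chi (t * sqnorm y).
pose B (x : 'rV[K]_s) := \sum_(y in F) b y * chi (c * dot x y).
have eS : \sum_(x in E) \sum_(y in F) chi (t * sqnorm (x - y))
        = \sum_(x in E) chi (t * sqnorm x) * B x.
  apply: eq_bigr => x _; rewrite /B mulr_sumr; apply: eq_bigr => y _.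
  rewrite /b mulrA -!chiD sqnormB /c; congr chi; ring.
have h1 : `|\sum_(x in E) \sum_(y in F) chi (t * sqnorm (x - y))| <= \sum_(x in E) `|B x|.
  rewrite eS; apply: le_trans (ler_norm_sum _ _ _) _; apply: ler_sum => x _.
  by rewrite normrM chiN1 mul1r.
have h2 : (\sum_(x in E) `|B x|) ^+ 2 <= #|E|%:R * \sum_(x in E) `|B x| ^+ 2.
  by apply: CS => x; apply: normr_real.
have h3 : \sum_(x in E) `|B x| ^+ 2 <= \sum_x `|B x| ^+ 2.
  rewrite [X in _ <= X](bigID (mem E)) /= lerDl.
  by apply: sumr_ge0 => x _; apply: exprn_ge0.
have h4 : \sum_x `|B x| ^+ 2 = (#|F| * #|K| ^ s)%:R.
  transitivity (\sum_x \sum_(y in F) \sum_(y' in F)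
      (b y * (b y')^*) * chi (c * dot x (y - y'))).
    apply: eq_bigr => x _; rewrite normCK /B rmorph_sum mulr_suml.
    apply: eq_bigr => y _; rewrite mulr_sumr; apply: eq_bigr => y' _.
    by rewrite rmorphM dotBr mulrBr chiD chiN mulrACA.
  rewrite exchange_big /=.
  transitivity (\sum_(y in F) (#|K| ^ s)%:R : algC).
    apply: eq_bigr => y yF; rewrite exchange_big /=.
    rewrite (bigD1 y) //= [X in _ + X]big1 ?addr0 => [|y' /andP[_ ny]].
      rewrite -mulr_sumr orthV // subrr eqxx -normCK chiN1 expr1n mul1r //.
    by rewrite -mulr_sumr orthV // subr_eq0 eq_sym (negbTE ny) mulr0.
  by rewrite sumr_const natrM mulr_natl.
have e2 : (0 < 2)%N by [].
apply: le_trans (_ : (\sum_(x in E) `|B x|) ^+ 2 <= _).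
  by rewrite ler_pXn2r // nnegrE ?sumr_ge0.
apply: (le_trans h2); rewrite natrM ler_wpM2l //; by rewrite -h4.
Qed.

Lemma main_ineq (E F : {set 'rV[K]_s}) : (2%:R : K) != 0 ->
  (900 * #|K| ^ s <= #|E| * #|F|)%N ->
  (30 * (#|K| * nu0 E F) <= (30 + #|K|) * (#|E| * #|F|))%N.
Proof.
move=> two0 hN.
set N := (#|E| * #|F|)%N.
pose S t := \sum_(x in E) \sum_(y in F) chi (t * sqnorm (x - y)).
have enu : (nu0 E F)%:R = \sum_(x in E) \sum_(y in F) ((sqnorm (x - y) == 0)%:R : algC).
  rewrite /nu0 -sum1_card natr_sum big_mkcond /=.
  rewrite [RHS]pair_big [RHS]big_mkcond /=; apply: eq_bigr => -[x y] _ /=.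
  rewrite inE /=; case: (x \in E); case: (y \in F) => //=.
  by case: (_ == 0).
have eq : (#|K| * nu0 E F)%:R = \sum_t S t.
  rewrite natrM enu mulr_sumr.
  transitivity (\sum_(x in E) \sum_(y in F) \sum_t chi (t * sqnorm (x - y))).
    apply: eq_bigr => x _; rewrite mulr_sumr; apply: eq_bigr => y _.
    by rewrite orthK; case: (_ == 0); rewrite ?mulr1 ?mulr0.
  by rewrite /S; under eq_bigr do rewrite exchange_big; rewrite exchange_big.
have S0 : S 0 = N%:R.
  rewrite /S; under eq_bigr do under eq_bigr do rewrite mul0r chi0.
  rewrite /N natrM; under eq_bigr do rewrite sumr_const. rewrite sumr_const. by rewrite [RHS]mulr_natl.
have SB t : t != 0 -> 30%:R * `|S t| <= N%:R.
  move=> t0; have h := S_bound E F t t0 two0.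
  rewrite -(@ler_pXn2r _ 2) // ?nnegrE ?mulr_ge0 ?ler0n //.
  apply: (le_trans (_ : _ <= (900 * (#|E| * (#|F| * #|K| ^ s)))%:R)).
    by rewrite exprMn natrM -natrX ler_wpM2l.
  rewrite -natrX ler_nat expnS expn1.
  have -> : (900 * (#|E| * (#|F| * #|K| ^ s)) = (900 * #|K| ^ s) * N)%N.
    by rewrite /N; ring.
  by rewrite leq_mul2r hN orbT.
have key : (30 * (#|K| * nu0 E F))%:R <= ((30 + #|K|) * N)%:R :> algC.
  rewrite natrM -[(#|K| * _)%:R]normr_nat eq (bigD1 0) //= S0.
  apply: (le_trans (_ : _ <= 30%:R * (N%:R + \sum_(t | t != 0) `|S t|))).
    rewrite ler_wpM2l //; apply: le_trans (ler_normD _ _) _.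
    by rewrite normr_nat lerD2l ler_norm_sum.
  rewrite mulrDr natrM (natrD _ 30) (mulrDl 30%:R) lerD2l mulr_sumr.
  apply: (le_trans (_ : _ <= \sum_(t | t != 0) N%:R)); first by apply: ler_sum => t; apply: SB.
  rewrite [X in _ <= X]mulr_natl -sumr_const [X in _ <= X](bigID (fun t => t != 0)) /= lerDl.
  by apply: sumr_ge0 => t _; rewrite ler0n.
by rewrite ler_nat in key.
Qed.
End Main.

Lemma two_neq0 (K : finFieldType) : odd #|K| -> (2%:R : K) != 0.
Proof.
move=> oK; apply/negP => h2.
have pc : 2 \in [pchar K] by apply/andP.
have := card_pprimeChar pc.
have -> : #|pPrimeCharType pc| = #|K| by [].
move=> e; move: oK; rewrite e oddX /=.
case: (logn 2 #|K|) e => // e.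
have : (1 < #|K|)%N by apply/card_gt1P; exists 0, 1; rewrite !inE eq_sym oner_neq0.
by rewrite e.
Qed.

Local Close Scope ring_scope.

Theorem lemma6 (K : finFieldType) (s : nat) (E F : {set 'rV[K]_s}) :
  odd #|K| -> (2 <= s)%N ->
  (#|E| * #|F| >= 900 * #|K| ^ s)%N ->
  (30 * nu0 E F <= 21 * (#|E| * #|F|))%N.
Proof.
move=> oK _ hN.
have [chi [chiD chiN1 chi1]] := exists_char K.
have h := @main_ineq K chi chiD chiN1 chi1 s E F (@two_neq0 K oK) hN.
have q2 : (1 < #|K|)%N by apply/card_gt1P; exists 0%R, 1%R; rewrite !inE eq_sym oner_neq0.
move: h q2; move: #|K| (nu0 E F) (#|E| * #|F|)%N => q n N h q2.
nia.
Qed.
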